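(* Let $\mathcal{F}_{-\frac12}=C^\infty_{\mathbb{C}}(S^{1|1})$ with even part $(\mathcal{F}_{-\frac12})_0=\{f_0(x)\}$ and odd part $(\mathcal{F}_{-\frac12})_1=\{\xi f_1(x)\}$, equipped with the operation (defined for pure-parity $f,g$ and extended bilinearly) $$(f,g)=-\tfrac12\,\overline{D}(f)\,g+\tfrac12\,(-1)^{\sigma(f)}\,f\,\overline{D}(g).$$ Then: (1) $(\mathcal{F}_{-\frac12})_1$ is closed under $(\,,\,)$ and is a commutative associative algebra; (2) setting $\rho_\psi v:=(\psi,v)$ for $\psi\in(\mathcal{F}_{-\frac12})_1$, $v\in(\mathcal{F}_{-\frac12})_0$, one has $\rho_\psi v\in(\mathcal{F}_{-\frac12})_0$ and $\rho_\varphi\circ\rho_\psi+\rho_\psi\circ\rho_\varphi=\rho_{(\varphi,\psi)}$ for all $\varphi,\psi\in(\mathcal{F}_{-\frac12})_1$; (3) the map $(\,,\,):(\mathcal{F}_{-\frac12})_0\otimes(\mathcal{F}_{-\frac12})_0\to(\mathcal{F}_{-\frac12})_1$ is antisymmetric and satisfies $\rho_\psi(v,w)=(\rho_\psi v,w)+(v,\rho_\psi w)$ for all $\psi\in(\mathcal{F}_{-\frac12})_1$, $v,w\in(\mathcal{F}_{-\frac12})_0$; (4) $(u,(v,w))+(v,(w,u))+(w,(u,v))=0$ for all $u,v,w\in(\mathcal{F}_{-\frac12})_0$.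
   Context: The supercircle $S^{1|1}$ has superalgebra of functions $C^\infty_{\mathbb{C}}(S^1)[\xi]$: elements $f=f_0(x)+\xi f_1(x)$ with $f_0,f_1$ smooth complex functions on $S^1$, $\xi$ odd with $\xi^2=0$, $x\xi=\xi x$. Parity: $\sigma(f_0)=0$, $\sigma(\xi f_1)=1$. $\partial_x$ acts coefficientwise, $\partial_\xi f=f_1$, and $\overline{D}=\partial_\xi-\xi\,\partial_x$. The operation above is the order-$\frac12$ supertransvectant $(f,g)=\mu\,\overline{D}(f)g-(-1)^{\sigma(f)}\lambda f\overline{D}(g)$ with $\lambda=\mu=-\frac12$. *)

(* Defs.v *)
From Stdlib Require Import Reals.
From Coquelicot Require Import Coquelicot.

Open Scope R_scope.

Definition smooth_R (g : R -> R) : Prop := forall (n : nat) (x : R), ex_derive_n g n x.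

(* a complex-valued function on S^1, seen as a 2 pi-periodic function on R,
   is smooth iff its real and imaginary parts are smooth *)
Definition smooth_S1 (f : R -> C) : Prop :=
  smooth_R (fun x => Re (f x)) /\ smooth_R (fun x => Im (f x)) /\
  (forall x : R, f (x + 2 * PI) = f x).

Definition dxC (f : R -> C) : R -> C :=
  fun x => (Derive (fun t => Re (f t)) x, Derive (fun t => Im (f t)) x).

(** * Functions on the supercircle S^{1|1}: f = f0(x) + xi f1(x) *)

Record sfun : Type := SFun { f0 : R -> C ; f1 : R -> C }.

Definition in_F (f : sfun) : Prop := smooth_S1 (f0 f) /\ smooth_S1 (f1 f).

Definition is_even (f : sfun) : Prop := in_F f /\ f1 f = (fun _ => RtoC 0).
Definition is_odd (f : sfun) : Prop := in_F f /\ f0 f = (fun _ => RtoC 0).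

Definition sf0 : sfun := SFun (fun _ => RtoC 0) (fun _ => RtoC 0).

Definition sf_add (f g : sfun) : sfun :=
  SFun (fun x => Cplus (f0 f x) (f0 g x)) (fun x => Cplus (f1 f x) (f1 g x)).

Definition sf_opp (f : sfun) : sfun :=
  SFun (fun x => Copp (f0 f x)) (fun x => Copp (f1 f x)).

Definition sf_scale (c : C) (f : sfun) : sfun :=
  SFun (fun x => Cmult c (f0 f x)) (fun x => Cmult c (f1 f x)).

(* (a + xi b)(c + xi d) = ac + xi (ad + bc), since xi^2 = 0 and x xi = xi x *)
Definition sf_mul (f g : sfun) : sfun :=
  SFun (fun x => Cmult (f0 f x) (f0 g x))
       (fun x => Cplus (Cmult (f0 f x) (f1 g x)) (Cmult (f1 f x) (f0 g x))).

Definition xi : sfun := SFun (fun _ => RtoC 0) (fun _ => RtoC 1).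

Definition pdx (f : sfun) : sfun := SFun (dxC (f0 f)) (dxC (f1 f)).
Definition pdxi (f : sfun) : sfun := SFun (f1 f) (fun _ => RtoC 0).

Definition Dbar (f : sfun) : sfun := sf_add (pdxi f) (sf_opp (sf_mul xi (pdx f))).

Definition even_part (f : sfun) : sfun := SFun (f0 f) (fun _ => RtoC 0).
Definition odd_part (f : sfun) : sfun := SFun (fun _ => RtoC 0) (f1 f).

(* The operation (f, g) = mu Dbar(f) g - (-1)^{sigma(f)} lambda f Dbar(g),
   lambda = mu = -1/2, on pure-parity f, extended bilinearly:
   (f, g) = -1/2 Dbar(f) g + 1/2 f_0 Dbar(g) - 1/2 f_1 Dbar(g)
   where f = f_0 + f_1 is the decomposition into even/odd parts. *)
Definition half : C := RtoC (/ 2).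

Definition br (f g : sfun) : sfun :=
  sf_add (sf_scale (Copp half) (sf_mul (Dbar f) g))
    (sf_add (sf_scale half (sf_mul (even_part f) (Dbar g)))
            (sf_opp (sf_scale half (sf_mul (odd_part f) (Dbar g))))).

Definition rho (psi v : sfun) : sfun := br psi v.

(* Main.v *)
Require Import Defs.
From Stdlib Require Import Reals Lra Lia FunctionalExtensionality.
From Coquelicot Require Import Coquelicot.

Lemma exdn_S (h : R -> R) n x : (forall y, ex_derive h y) ->
  ex_derive_n (Derive h) n x -> ex_derive_n h (S n) x.
Proof.
  intros Hd H. destruct n as [|n]; [simpl; apply Hd|].
  simpl in *. apply (ex_derive_ext (Derive_n (Derive_n h 1) n)).
  - intros t. rewrite Derive_n_comp. now rewrite Nat.add_1_r.
  - exact H.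
Qed.

Lemma exdn_D (h : R -> R) n x : ex_derive_n h (S n) x -> ex_derive_n (Derive h) n x.
Proof.
  intros H. destruct n as [|n]; [simpl; auto|].
  simpl in *. apply (ex_derive_ext (Derive_n h (S n))).
  - intros t. rewrite <- Nat.add_1_r, <- Derive_n_comp. reflexivity.
  - exact H.
Qed.

Lemma smooth_ex h : smooth_R h -> forall x, ex_derive h x.
Proof. intros H x. exact (H 1%nat x). Qed.

Lemma smooth_D h : smooth_R h -> smooth_R (Derive h).
Proof. intros H n x. apply exdn_D. apply H. Qed.

Lemma smooth_ext f g : (forall t, f t = g t) -> smooth_R f -> smooth_R g.
Proof. intros E H n x. apply (ex_derive_n_ext f); auto. Qed.

Lemma smooth_plus f g : smooth_R f -> smooth_R g -> smooth_R (fun t => f t + g t).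
Proof.
  intros Hf Hg n x. apply ex_derive_n_plus; apply filter_forall; intros y k _; auto.
Qed.

Lemma smooth_opp f : smooth_R f -> smooth_R (fun t => - f t).
Proof. intros Hf n x. apply ex_derive_n_opp; auto. Qed.

Lemma smooth_scal a f : smooth_R f -> smooth_R (fun t => a * f t).
Proof. intros Hf n x. apply ex_derive_n_scal_l; auto. Qed.

Lemma smooth_mult_n n : forall f g, smooth_R f -> smooth_R g ->
  forall k, (k <= n)%nat -> forall x, ex_derive_n (fun t => f t * g t) k x.
Proof.
  induction n as [|n IH]; intros f g Hf Hg k Hk x.
  - assert (k = 0%nat) by lia. subst. simpl; auto.
  - destruct (Nat.le_gt_cases k n) as [Hkn|Hkn]; [apply IH; auto|].
    assert (k = S n) by lia. subst k.
    apply exdn_S.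
    + intros y; apply ex_derive_mult; apply smooth_ex; auto.
    + apply (ex_derive_n_ext (fun t => Derive f t * g t + f t * Derive g t)).
      * intros t. rewrite Derive_mult; auto; apply smooth_ex; auto.
      * apply (ex_derive_n_plus (fun t => Derive f t * g t) (fun t => f t * Derive g t));
        apply filter_forall; intros y k' Hk'; apply IH; auto using smooth_D.
Qed.

Lemma smooth_mult f g : smooth_R f -> smooth_R g -> smooth_R (fun t => f t * g t).
Proof. intros Hf Hg n x. apply (smooth_mult_n n); auto. Qed.

Lemma smooth_const a : smooth_R (fun _ => a).
Proof. intros n x. apply ex_derive_n_const. Qed.

Lemma Derive_per (f : R -> R) T : (forall y, f (y + T) = f y) ->
  forall x, Derive f (x + T) = Derive f x.
Proof.
  intros H x. unfold Derive. f_equal. f_equal. apply functional_extensionality.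
  intros h. replace (x + T + h) with ((x + h) + T) by ring. rewrite !H. reflexivity.
Qed.

Ltac Ceq := apply injective_projections; simpl; try field.

Lemma sS1_0 : smooth_S1 (fun _ => RtoC 0).
Proof. repeat split; try apply smooth_const. Qed.

Lemma sS1_plus f g : smooth_S1 f -> smooth_S1 g -> smooth_S1 (fun x => Cplus (f x) (g x)).
Proof.
  intros [f1 [f2 f3]] [g1 [g2 g3]]. repeat split.
  - apply (smooth_plus _ _ f1 g1).
  - apply (smooth_plus _ _ f2 g2).
  - intros x. rewrite f3, g3. reflexivity.
Qed.

Lemma sS1_opp f : smooth_S1 f -> smooth_S1 (fun x => Copp (f x)).
Proof.
  intros [f1 [f2 f3]]. repeat split.
  - apply (smooth_opp _ f1).
  - apply (smooth_opp _ f2).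
  - intros x. rewrite f3. reflexivity.
Qed.

Lemma sS1_mul f g : smooth_S1 f -> smooth_S1 g -> smooth_S1 (fun x => Cmult (f x) (g x)).
Proof.
  intros [f1 [f2 f3]] [g1 [g2 g3]]. repeat split.
  - apply (smooth_plus (fun t => Re (f t) * Re (g t)) (fun t => - (Im (f t) * Im (g t))));
      [apply smooth_mult; auto| apply smooth_opp; apply smooth_mult; auto].
  - apply (smooth_plus (fun t => Re (f t) * Im (g t)) (fun t => (Im (f t) * Re (g t))));
      apply smooth_mult; auto.
  - intros x. rewrite f3, g3. reflexivity.
Qed.

Lemma sS1_scal c f : smooth_S1 f -> smooth_S1 (fun x => Cmult c (f x)).
Proof.
  intros Hf. apply (sS1_mul (fun _ => c) f); auto.
  repeat split; try apply smooth_const.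
Qed.

Lemma sS1_dx f : smooth_S1 f -> smooth_S1 (dxC f).
Proof.
  intros [f1 [f2 f3]]. unfold dxC. repeat split.
  - apply (smooth_D _ f1).
  - apply (smooth_D _ f2).
  - intros x. rewrite !(Derive_per _ (2 * PI)); auto; intros y; rewrite f3; reflexivity.
Qed.

Lemma dxC0 : dxC (fun _ => RtoC 0) = (fun _ => RtoC 0).
Proof.
  apply functional_extensionality; intros x. unfold dxC. simpl.
  rewrite Derive_const. reflexivity.
Qed.

Definition dC (f : R -> C) := forall x, ex_derive (fun t => Re (f t)) x /\ ex_derive (fun t => Im (f t)) x.

Lemma sS1_dC f : smooth_S1 f -> dC f.
Proof. intros [f1 [f2 _]] x. split; apply smooth_ex; auto. Qed.

Lemma dxC_mul f g : dC f -> dC g ->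
  dxC (fun x => Cmult (f x) (g x)) = (fun x => Cplus (Cmult (dxC f x) (g x)) (Cmult (f x) (dxC g x))).
Proof.
  intros Hf Hg. apply functional_extensionality; intros x.
  destruct (Hf x) as [a1 a2]; destruct (Hg x) as [b1 b2].
  unfold dxC, Cmult, Cplus, Re, Im; simpl.
  apply injective_projections; simpl.
  - rewrite Derive_minus by (apply ex_derive_mult; auto).
    rewrite !Derive_mult by auto. ring.
  - rewrite Derive_plus by (apply ex_derive_mult; auto).
    rewrite !Derive_mult by auto. ring.
Qed.

Lemma dxC_const c : dxC (fun _ => c) = (fun _ => RtoC 0).
Proof.
  apply functional_extensionality; intros x. unfold dxC.
  rewrite !Derive_const. reflexivity.
Qed.

Ltac brsimp := unfold br, Dbar, pdx, pdxi, sf_mul, sf_add, sf_opp, sf_scale, even_part, odd_part, xi;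
  simpl; rewrite ?dxC0; f_equal; apply functional_extensionality; intros x; Ceq.

Lemma br_oo p q : br (SFun (fun _ => RtoC 0) p) (SFun (fun _ => RtoC 0) q) =
  SFun (fun _ => RtoC 0) (fun x => Copp (Cmult (p x) (q x))).
Proof. brsimp. Qed.

Lemma br_oe p a : br (SFun (fun _ => RtoC 0) p) (SFun a (fun _ => RtoC 0)) =
  SFun (fun x => Cmult (Copp half) (Cmult (p x) (a x))) (fun _ => RtoC 0).
Proof. brsimp. Qed.

Lemma br_eo a c : br (SFun a (fun _ => RtoC 0)) (SFun (fun _ => RtoC 0) c) =
  SFun (fun x => Cmult half (Cmult (a x) (c x))) (fun _ => RtoC 0).
Proof. brsimp. Qed.

Lemma br_ee a b : br (SFun a (fun _ => RtoC 0)) (SFun b (fun _ => RtoC 0)) =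
  SFun (fun _ => RtoC 0) (fun x => Cmult half (Cplus (Cmult (dxC a x) (b x)) (Copp (Cmult (a x) (dxC b x))))).
Proof. brsimp. Qed.

Ltac dest_odd H := let a := fresh "z" in let HF := fresh "HF" in let E := fresh "E" in
  match type of H with is_odd ?f => destruct f as [a ?]; destruct H as [HF E]; simpl in E; subst a end.
Ltac dest_even H := let a := fresh "z" in let HF := fresh "HF" in let E := fresh "E" in
  match type of H with is_even ?f => destruct f as [? a]; destruct H as [HF E]; simpl in E; subst a end.
Ltac ext := f_equal; apply functional_extensionality; intros ?; Ceq.
Lemma sS1_const c : smooth_S1 (fun _ => c).
Proof. repeat split; apply smooth_const. Qed.
Ltac sm := simpl in *; repeat match goal with
  | |- smooth_S1 (fun x => Cplus _ _) => apply sS1_plus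
  | |- smooth_S1 (fun x => Copp _) => apply sS1_opp
  | |- smooth_S1 (fun x => Cmult _ _) => apply sS1_mul
  | |- smooth_S1 (dxC _) => apply sS1_dx
  | |- smooth_S1 (fun x => ?f x) => assumption
  | |- smooth_S1 ?f => assumption
  | |- smooth_S1 (fun _ => _) => apply sS1_const
  end.

Theorem proposition2p3 :
  (forall phi psi : sfun, is_odd phi -> is_odd psi -> is_odd (br phi psi)) /\
  (forall phi psi : sfun, is_odd phi -> is_odd psi -> br phi psi = br psi phi) /\
  (forall phi psi chi : sfun, is_odd phi -> is_odd psi -> is_odd chi ->
     br (br phi psi) chi = br phi (br psi chi)) /\
  (forall psi v : sfun, is_odd psi -> is_even v -> is_even (rho psi v)) /\
  (forall phi psi v : sfun, is_odd phi -> is_odd psi -> is_even v ->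
     sf_add (rho phi (rho psi v)) (rho psi (rho phi v)) = rho (br phi psi) v) /\
  (forall v w : sfun, is_even v -> is_even w -> is_odd (br v w)) /\
  (forall v w : sfun, is_even v -> is_even w -> br v w = sf_opp (br w v)) /\
  (forall psi v w : sfun, is_odd psi -> is_even v -> is_even w ->
     rho psi (br v w) = sf_add (br (rho psi v) w) (br v (rho psi w))) /\
  (forall u v w : sfun, is_even u -> is_even v -> is_even w ->
     sf_add (sf_add (br u (br v w)) (br v (br w u))) (br w (br u v)) = sf0).
Proof.
  split; [|split; [|split; [|split; [|split; [|split; [|split; [|split]]]]]]].
  - intros f g Hf Hg. dest_odd Hf. dest_odd Hg. destruct HF, HF0.
    rewrite br_oo. split; [split; simpl; sm|reflexivity].
  - intros f g Hf Hg. dest_odd Hf. dest_odd Hg. rewrite !br_oo. ext.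
  - intros f g h Hf Hg Hh. dest_odd Hf. dest_odd Hg. dest_odd Hh.
    rewrite !br_oo. ext.
  - intros f g Hf Hg. dest_odd Hf. dest_even Hg. destruct HF, HF0. unfold rho.
    rewrite br_oe. split; [split; simpl; sm|reflexivity].
  - intros f g h Hf Hg Hh. dest_odd Hf. dest_odd Hg. dest_even Hh. unfold rho.
    rewrite !br_oe, br_oo, br_oe. unfold sf_add. simpl. ext.
  - intros f g Hf Hg. dest_even Hf. dest_even Hg. destruct HF, HF0.
    rewrite br_ee. split; [split; simpl; sm|reflexivity].
  - intros f g Hf Hg. dest_even Hf. dest_even Hg. rewrite !br_ee. unfold sf_opp; simpl. ext.
  - intros f g h Hf Hg Hh. dest_odd Hf. dest_even Hg. dest_even Hh.
    destruct HF as [Hq1 Hq2]. destruct HF0 as [Ha1 Ha2]. destruct HF1 as [Hb1 Hb2].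
    unfold rho. rewrite br_ee, !br_oe, br_oo, !br_ee.
    assert (Hq : smooth_S1 f1) by (simpl in *; assumption).
    assert (Ha : smooth_S1 f0) by (simpl in *; assumption).
    assert (Hb : smooth_S1 f2) by (simpl in *; assumption).
    rewrite (dxC_mul (fun _ => Copp half) (fun x => Cmult (f1 x) (f0 x)))
      by (apply sS1_dC; sm).
    rewrite (dxC_mul (fun _ => Copp half) (fun x => Cmult (f1 x) (f2 x)))
      by (apply sS1_dC; sm).
    rewrite dxC_const, !dxC_mul by (apply sS1_dC; sm).
    unfold sf_add; simpl. ext.
  - intros f g h Hf Hg Hh. dest_even Hf. dest_even Hg. dest_even Hh.
    rewrite !br_ee, !br_eo. unfold sf_add, sf0; simpl. ext.
Qed.
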